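(* Let $n\ge 2$, $a,b,c\in\mathbb{Z}_n$ and $P(x,y)=a+bx+cy$. Then $(\mathbb{Z}_n,* )$ with $x*y=P(x,y)$ is a quasigroup satisfying the Abel-Grassman law if and only if $c^2\equiv b\pmod n$ and $\gcd(b,n)=\gcd(c,n)=1$.
   Context: $\mathbb{Z}_n$ is the ring of integers modulo $n$. A groupoid $(G,\cdot)$ is a quasigroup if for all $u,v\in G$ the equations $u\cdot x=v$ and $y\cdot u=v$ have unique solutions. The Abel-Grassman law is $x\cdot(y\cdot z)=z\cdot(y\cdot x)$ for all $x,y,z$. *)

(* Defs.v *)
From HB Require Import structures.
From mathcomp Require Import all_boot all_order all_algebra.
Set Implicit Arguments. Unset Strict Implicit. Unset Printing Implicit Defensive.
Import GRing.Theory.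
Local Open Scope ring_scope.

Definition is_quasigroup (G : Type) (op : G -> G -> G) : Prop :=
  forall u v : G,
    (exists! x : G, op u x = v) /\ (exists! y : G, op y u = v).

Definition abel_grassman (G : Type) (op : G -> G -> G) : Prop :=
  forall x y z : G, op x (op y z) = op z (op y x).

Definition linop (n : nat) (a b c : 'Z_n) : 'Z_n -> 'Z_n -> 'Z_n :=
  fun x y => a + b * x + c * y.

(* Main.v *)
Require Import Defs.
From HB Require Import structures.
From mathcomp Require Import all_boot all_order all_algebra.
From mathcomp Require Import ring.
Import GRing.Theory.
Local Open Scope ring_scope.

Lemma unitZ n (hn : (1 < n)%N) (x : 'Z_n) : (x \is a GRing.unit) = (gcdn (val x) n == 1%N).
Proof. have := unitZpE (val x) hn. rewrite natr_Zp. move=> ->. by rewrite /coprime gcdnC. Qed.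

Theorem mainTheorem10 (n : nat) (hn : (1 < n)%N) (a b c : 'Z_n) :
  (is_quasigroup (linop a b c) /\ abel_grassman (linop a b c)) <->
  (c * c = b /\ gcdn (val b) n = 1%N /\ gcdn (val c) n = 1%N).
Proof.
rewrite /is_quasigroup /abel_grassman /linop; split.
- move=> [Q A].
  have Hcb : c * c = b.
    have H := A 1 0 0.
    have E : a + b * 1 + c * (a + b * 0 + c * 0) - (a + b * 0 + c * (a + b * 0 + c * 1)) = b - c * c by ring.
    by apply/eqP; rewrite eq_sym -subr_eq0 -E H subrr.
  have [_ [y [Hy _]]] := Q 0 (a + 1).
  have [[x [Hx _]] _] := Q 0 (a + 1).
  split=> //; split; apply/eqP; rewrite -unitZ //.
  + apply/unitrPr; exists y.
    by move: Hy; rewrite mulr0 addr0 => /addrI; rewrite mulrC.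
  + apply/unitrPr; exists x.
    by move: Hx; rewrite mulr0 addr0 => /addrI.
- move=> [Hcb [Hb Hc]].
  have ub : b \is a GRing.unit by rewrite unitZ // Hb.
  have uc : c \is a GRing.unit by rewrite unitZ // Hc.
  split.
  + move=> u v; split.
    * exists (c^-1 * (v - a - b * u)); split.
        by rewrite mulrA divrr // mul1r; ring.
      move=> x <-.
      by rewrite (_ : a + b * u + c * x - a - b * u = c * x) ?mulKr //; ring.
    * exists (b^-1 * (v - a - c * u)); split.
        by rewrite mulrA divrr // mul1r; ring.
      move=> x <-.
      by rewrite (_ : a + b * x + c * u - a - c * u = b * x) ?mulKr //; ring.
  + move=> x y z. rewrite -Hcb. ring.
Qed.
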